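(* Let $\pi_1,\pi_2\colon\mathsf{States}\to\mathbb{R}_{\ge0}$ be potential functions such that $\pi_1\preceq\pi_1\oplus\pi_2$ (where $\pi_1\oplus\pi_2$ is itself used as a potential function). Then for every program $C$ and every $X\in\mathbb{A}_{\pi_1}$: if $\mathrm{mod}(C)\cap\mathrm{Vars}(\pi_2)=\emptyset$ and $X+(\pi_1\oplus\pi_2)\preceq(X+\pi_1)\oplus\pi_2$, then $$\mathsf{aert}_{\pi_1\oplus\pi_2}[\![C]\!](X)\;\preceq\;\big(\mathsf{aert}_{\pi_1}[\![C]\!](X)+\pi_1\big)\oplus\pi_2\;-\;\pi_1\oplus\pi_2 .$$
   Context: States and programs. Fix a finite set $\mathrm{Vars}$ of variables; values are $\mathbb{N}$, locations are $\mathbb{N}_{>0}$. A stack is $s\colon \mathrm{Vars}\to\mathbb{N}$; a heap is a partial map $h$ from a finite set $\mathrm{dom}(h)\subseteq\mathbb{N}_{>0}$ to $\mathbb{N}$. $h_1\perp h_2$ means disjoint domains; then $h_1\star h_2$ is their union; $h_\emptyset$ is the empty heap. $\mathsf{States}$ is the set of pairs $(s,h)$. $s(e)$ is the value of a (heap-independent) arithmetic expression $e$ under $s$, $s\models\varphi$ means the Boolean expression $\varphi$ holds under $s$, $s[x\mapsto v]$ is the updated stack. Programs are generated by $C ::= \mathtt{tick}(e) \mid x:=e \mid x:=\mathtt{alloc}(e) \mid \langle e\rangle:=e' \mid x:=\langle e\rangle \mid \mathtt{free}(e) \mid \{C\}[p]\{C\} \mid \mathtt{if}(\varphi)\{C\}\mathtt{else}\{C\}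 \mid C;C \mid \mathtt{while}(\varphi)\{C\}$, where $p$ is an expression with $s(p)\in[0,1]\cap\mathbb{Q}$ for all $s$. The statements other than tick, probabilistic choice, conditional, sequencing and loops are called atomic. $\mathrm{mod}(C)$ is the set of variables potentially modified by $C$, i.e. the variables $x$ occurring as the target of $x:=e$, $x:=\mathtt{alloc}(e)$ or $x:=\langle e\rangle$ in $C$. For a function $g$ on states, $x\notin\mathrm{Vars}(g)$ means $g(s[x\mapsto v],h)=g(s,h)$ for all $(s,h)$ and $v$. Runtimes. $\mathbb{T}$ is the set of functions $\mathsf{States}\to[0,\infty]$, ordered pointwise by $\preceq$; arithmetic is pointwise with $0\cdot\infty=0$. $[\varphi]$ is the $0/1$-valued Iverson bracket. Truncated subtraction: $a\dot- b=\max(a-b,0)$, $\infty\dot- b=\infty$ for finite $b$, $a\dot-\infty=0$. Separating sum $(f\oplus g)(s,h)=\min\{f(s,h_1)+g(s,h_2)\mid h=h_1\star h_2\}$ (for nonnegative $f,g$); $(f \mathbin{-\!\!\ominus} g)(s,h)=\sup\{g(s,h\star h')\dot- f(s,h')\mid h'\perp h\}$; $(\inf y\colon f)(s,h)=\inf_{v\in\mathbb{N}} f(s[y\mapsto v],h)$, $(\sup y\colon f)(s,h)=\sup_{v\in\mathbb{N}}f(s[y\mapsto v],h)$; $f[x/e](s,h)=f(s[x\mapsto s(e)],h)$. $\mathsf{tm}(e)(s,h)=s(e)$ if $h=h_\emptyset$, else $\infty$; $[e\mapsto e'](s,h)=0$ if $\mathrm{dom}(h)=\{s(e)\}$ and $h(s(e))=s(e')$,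 else $\infty$; $[e\mapsto -](s,h)=0$ if $\mathrm{dom}(h)=\{s(e)\}$, else $\infty$; $\bigoplus_{i=1}^{e} f_i$ is the separating sum over $i=1,\dots,s(e)$ (empty one: $[\mathsf{emp}]$, which is $0$ if $h=h_\emptyset$, else $\infty$). $\mathsf{ert}[\![C]\!]\colon\mathbb{T}\to\mathbb{T}$ (with $v$ fresh): $\mathsf{ert}[\![\mathtt{tick}(e)]\!](f)=\mathsf{tm}(e)\oplus f$; $\mathsf{ert}[\![x:=e]\!](f)=f[x/e]$; $\mathsf{ert}[\![x:=\mathtt{alloc}(e)]\!](f)=\sup v\colon (\bigoplus_{i=1}^{e}[v+i-1\mapsto 0])\mathbin{-\!\!\ominus} f[x/v]$; $\mathsf{ert}[\![\langle e\rangle:=e']\!](f)=[e\mapsto-]\oplus([e\mapsto e']\mathbin{-\!\!\ominus} f)$; $\mathsf{ert}[\![x:=\langle e\rangle]\!](f)=\inf v\colon [e\mapsto v]\oplus([e\mapsto v]\mathbin{-\!\!\ominus} f[x/v])$; $\mathsf{ert}[\![\mathtt{free}(e)]\!](f)=[e\mapsto-]\oplus f$; $\mathsf{ert}[\![C_1;C_2]\!](f)=\mathsf{ert}[\![C_1]\!](\mathsf{ert}[\![C_2]\!](f))$; conditional: $[\varphi]\cdot\mathsf{ert}[\![C_1]\!](f)+[\neg\varphi]\cdot\mathsf{ert}[\![C_2]\!](f)$; probabilistic choice: $p\cdot\mathsf{ert}[\![C_1]\!](f)+(1-p)\cdot\mathsf{ert}[\![C_2]\!](f)$; $\mathsf{ert}[\![\mathtt{while}(\varphi)\{C\}]\!](f)=\mathrm{lfp}\,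 g.\ [\neg\varphi]\cdot f+[\varphi]\cdot\mathsf{ert}[\![C]\!](g)$. Amortized runtimes. A potential function is $\pi\colon\mathsf{States}\to\mathbb{R}_{\ge0}$. $\mathbb{A}_\pi=\{X\colon\mathsf{States}\to\mathbb{R}\cup\{\infty\}\mid -\pi\le X\}$, ordered pointwise (complete lattice, least element $-\pi$). $\mathsf{aert}_\pi[\![C]\!]\colon\mathbb{A}_\pi\to\mathbb{A}_\pi$: $\mathsf{aert}_\pi[\![\mathtt{tick}(e)]\!](X)=e+X$; for atomic $C$ other than tick, $\mathsf{aert}_\pi[\![C]\!](X)=\mathsf{ert}[\![C]\!](X+\pi)-\pi$; sequencing by composition; conditional $[\varphi]\cdot\mathsf{aert}_\pi[\![C_1]\!](X)+[\neg\varphi]\cdot\mathsf{aert}_\pi[\![C_2]\!](X)$; probabilistic choice $p\cdot\mathsf{aert}_\pi[\![C_1]\!](X)+(1-p)\cdot\mathsf{aert}_\pi[\![C_2]\!](X)$; $\mathsf{aert}_\pi[\![\mathtt{while}(\varphi)\{C'\}]\!](X)=\mathrm{lfp}\,Y.\ [\neg\varphi]\cdot X+[\varphi]\cdot\mathsf{aert}_\pi[\![C']\!](Y)$ in $(\mathbb{A}_\pi,\preceq)$. *)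

(* Defs.v *)
From HB Require Import structures.
From mathcomp Require Import all_boot all_order all_algebra.
From mathcomp Require Import finmap.
From mathcomp Require Import boolp classical_sets reals constructive_ereal ereal.

Set Implicit Arguments.
Unset Strict Implicit.
Unset Printing Implicit Defensive.

Import Order.TTheory GRing.Theory Num.Theory.

Definition loc := {n : nat | (0 < n)%N}.

Definition stack (V : finType) := V -> nat.
Definition heap := {fmap loc -> nat}.
Definition state (V : finType) := (stack V * heap)%type.

Definition aexp (V : finType) := stack V -> nat.
Definition bexp (V : finType) := stack V -> bool.
Definition prob := {q : rat | (0 <= q <= 1)%R}.
Definition pexp (V : finType) := stack V -> prob.

Definition cst (V : finType) (n : nat) : aexp V := fun _ => n.

Definition upd (V : finType) (s : stack V) (x : V) (v : nat) : stack V :=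
  fun y => if y == x then v else s y.

Definition hdisj (h1 h2 : heap) : bool := fdisjoint (domf h1) (domf h2).
Definition hunion (h1 h2 : heap) : heap := catf h1 h2.

Inductive prog (V : finType) : Type :=
| Tick of aexp V
| Assign of V & aexp V
| Alloc of V & aexp V
| Store of aexp V & aexp V          (* <e> := e' *)
| Lookup of V & aexp V                (* x := <e>  *)
| Free of aexp V
| PChoice of prog V & pexp V & prog V
| If of bexp V & prog V & prog V
| Seq of prog V & prog V
| While of bexp V & prog V.

Fixpoint mods (V : finType) (C : prog V) : seq V :=
  match C with
  | Tick _ => [::]
  | Assign x _ => [:: x]
  | Alloc x _ => [:: x]
  | Store _ _ => [::]
  | Lookup x _ => [:: x]
  | Free _ => [::]
  | PChoice C1 _ C2 => mods C1 ++ mods C2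
  | If _ C1 C2 => mods C1 ++ mods C2
  | Seq C1 C2 => mods C1 ++ mods C2
  | While _ C1 => mods C1
  end.

Definition notinVars (V : finType) (T : Type) (x : V) (g : state V -> T) : Prop :=
  forall (s : stack V) (h : heap) (v : nat), g (upd s x v, h) = g (s, h).

Local Open Scope ereal_scope.

Section Runtimes.
Variables (R : realType) (V : finType).

(** Functions on states with extended-real values; runtimes (T) are the
    nonnegative ones, amortized runtimes (A_pi) those above -pi. *)
Definition fn := state V -> \bar R.

Definition liftE (f : state V -> R) : fn := fun st => (f st)%:E.

Definition fadd (f g : fn) : fn := fun st => f st + g st.

Definition tsub (a b : \bar R) : \bar R :=
  if b == +oo then 0 else maxe (a - b) 0.

Definition ind (P : Prop) : \bar R := if `[< P >] then 0 else +oo.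
Definition iv (b : bool) : \bar R := (b%:R)%:E.

Definition sepsum (f g : fn) : fn := fun st =>
  ereal_inf [set x | exists h1 h2, hdisj h1 h2 /\ st.2 = hunion h1 h2 /\
                                   x = f (st.1, h1) + g (st.1, h2)].

Definition wand (f g : fn) : fn := fun st =>
  ereal_sup [set x | exists h', hdisj st.2 h' /\
                    x = tsub (g (st.1, hunion st.2 h')) (f (st.1, h'))].

Definition emp : fn := fun st => if st.2 == [fmap]%fmap then 0 else +oo.

Definition tm (e : aexp V) : fn := fun st =>
  if st.2 == [fmap]%fmap then ((e st.1)%:R)%:E else +oo.

Definition ptsto (e e' : aexp V) : fn := fun st =>
  ind (exists l : loc, val l = e st.1 /\ st.2 = ([fmap].[l <- e' st.1])%fmap).

Definition ptsany (e : aexp V) : fn := fun st =>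
  ind (exists (l : loc) (v : nat), val l = e st.1 /\ st.2 = ([fmap].[l <- v])%fmap).

Fixpoint bigsep (n : nat) (F : nat -> fn) : fn :=
  match n with
  | 0 => emp
  | n'.+1 => sepsum (bigsep n' F) (F n'.+1)
  end.

Definition subst (f : fn) (x : V) (e : aexp V) : fn := fun st =>
  f (upd st.1 x (e st.1), st.2).

(** Least fixed point of Phi in the complete lattice {Y | P Y} (pointwise
    order), given (Knaster–Tarski) as the pointwise infimum of its
    pre-fixed points. *)
Definition lfp (P : fn -> Prop) (Phi : fn -> fn) : fn := fun st =>
  ereal_inf [set Y st | Y in [set Y | P Y /\ (forall st', Phi Y st' <= Y st')]].

Definition pr (p : pexp V) (s : stack V) : R := ratr (val (p s)).

Fixpoint ert (C : prog V) (f : fn) {struct C} : fn :=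
  match C with
  | Tick e => sepsum (tm e) f
  | Assign x e => subst f x e
  | Alloc x e => fun st =>
      ereal_sup [set wand (fun st' => bigsep (e st'.1)
                            (fun i => ptsto (fun _ => (n + i - 1)%N) (@cst V 0)) st')
                          (subst f x (@cst V n)) st | n in [set: nat]]
  | Store e e' => sepsum (ptsany e) (wand (ptsto e e') f)
  | Lookup x e => fun st =>
      ereal_inf [set sepsum (ptsto e (@cst V n))
                            (wand (ptsto e (@cst V n)) (subst f x (@cst V n))) st
                | n in [set: nat]]
  | Free e => sepsum (ptsany e) f
  | PChoice C1 p C2 => fun st =>
      (pr p st.1)%:E * ert C1 f st + (1 - pr p st.1)%:E * ert C2 f st
  | If b C1 C2 => fun st =>
      iv (b st.1) * ert C1 f st + iv (~~ b st.1) * ert C2 f st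
  | Seq C1 C2 => ert C1 (ert C2 f)
  | While b C1 =>
      lfp (fun g => forall st, 0 <= g st)
          (fun g st => iv (~~ b st.1) * f st + iv (b st.1) * ert C1 g st)
  end.

(** Amortized expected runtime w.r.t. potential pi (pi finite-valued, >= 0). *)
Fixpoint aert (pi : fn) (C : prog V) (X : fn) {struct C} : fn :=
  match C with
  | Tick e => fun st => ((e st.1)%:R)%:E + X st
  | Assign x e => fun st => ert (Assign x e) (fadd X pi) st - pi st
  | Alloc x e => fun st => ert (Alloc x e) (fadd X pi) st - pi st
  | Store e e' => fun st => ert (Store e e') (fadd X pi) st - pi st
  | Lookup x e => fun st => ert (Lookup x e) (fadd X pi) st - pi st
  | Free e => fun st => ert (Free e) (fadd X pi) st - pi st
  | PChoice C1 p C2 => fun st =>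
      (pr p st.1)%:E * aert pi C1 X st + (1 - pr p st.1)%:E * aert pi C2 X st
  | If b C1 C2 => fun st =>
      iv (b st.1) * aert pi C1 X st + iv (~~ b st.1) * aert pi C2 X st
  | Seq C1 C2 => aert pi C1 (aert pi C2 X)
  | While b C1 =>
      lfp (fun Y => forall st, - pi st <= Y st)
          (fun Y st => iv (~~ b st.1) * X st + iv (b st.1) * aert pi C1 Y st)
  end.

Definition inA (pi : fn) (X : fn) : Prop := forall st, - pi st <= X st.

End Runtimes.

(* Main.v *)
Require Import Defs.
From HB Require Import structures.
From mathcomp Require Import all_boot all_order all_algebra.
From mathcomp Require Import finmap.
From mathcomp Require Import boolp classical_sets reals constructive_ereal ereal.

Import Order.TTheory GRing.Theory Num.Theory.
Set Implicit Arguments.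
Unset Strict Implicit.
Unset Printing Implicit Defensive.
Local Open Scope ereal_scope.

Lemma hdisj_sym a b : hdisj a b = hdisj b a.
Proof. by rewrite /hdisj fdisjoint_sym. Qed.
Lemma hdisjUl a b c : hdisj (hunion a b) c = hdisj a c && hdisj b c.
Proof. by rewrite /hdisj /hunion domf_cat fdisjointUX. Qed.
Lemma hdisjUr a b c : hdisj a (hunion b c) = hdisj a b && hdisj a c.
Proof. by rewrite /hdisj /hunion domf_cat fdisjointXU. Qed.
Lemma hunionA a b c : hunion a (hunion b c) = hunion (hunion a b) c.
Proof. by rewrite /hunion catfA. Qed.
Lemma hunionC a b : hdisj a b -> hunion a b = hunion b a.
Proof. by move=> d; rewrite /hunion disjoint_catfC. Qed.
Lemma hunion0 a : hunion a [fmap]%fmap = a.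
Proof. by rewrite /hunion catf0. Qed.
Lemma hdisj0 a : hdisj a [fmap]%fmap.
Proof. by rewrite /hdisj domf0 fdisjointX0. Qed.

Section Gen.
Variables (R : realType) (V : finType).
Implicit Types (f g A B : fn R V).

Lemma sepsum_le f g s h1 h2 : hdisj h1 h2 ->
  sepsum f g (s, hunion h1 h2) <= f (s, h1) + g (s, h2).
Proof. by move=> d; apply: ereal_inf_le; exists (f (s,h1) + g (s,h2)) => //; exists h1, h2. Qed.

Lemma sepsum_ge f g st M :
  (forall h1 h2, hdisj h1 h2 -> st.2 = hunion h1 h2 -> M <= f (st.1, h1) + g (st.1, h2)) ->
  M <= sepsum f g st.
Proof. by move=> H; apply: le_ereal_inf_tmp => _ [h1 [h2 [d [e ->]]]]; exact: H. Qed.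

Lemma sepsum_ge0 f g st : (forall st, 0 <= f st) -> (forall st, 0 <= g st) ->
  0 <= sepsum f g st.
Proof. by move=> F G; apply: sepsum_ge => *; apply: adde_ge0. Qed.

Lemma sepsum_mono_s f f' g g' s :
  (forall h, f (s, h) <= f' (s, h)) -> (forall h, g (s, h) <= g' (s, h)) ->
  forall h, sepsum f g (s, h) <= sepsum f' g' (s, h).
Proof.
move=> F G h; apply: sepsum_ge => h1 h2 d /= ->.
by apply: le_trans (sepsum_le _ _ _ d) _; apply: leeD.
Qed.

Lemma sepsum_mono f f' g g' :
  (forall st, f st <= f' st) -> (forall st, g st <= g' st) ->
  forall st, sepsum f g st <= sepsum f' g' st.
Proof. by move=> F G [s h]; apply: sepsum_mono_s. Qed.

Lemma sepsum_assoc A f g st : (forall st, g st \is a fin_num) ->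
  sepsum A (sepsum f g) st <= sepsum (sepsum A f) g st.
Proof.
move=> G; case: st => s h; apply: sepsum_ge => k1 k2 d /= e; subst h.
rewrite -leeBlDr //; apply: sepsum_ge => a b d' /= e'; subst k1.
rewrite leeBlDr //.
move: d; rewrite hdisjUl => /andP[dak dbk].
have dabk : hdisj a (hunion b k2) by rewrite hdisjUr d' dak.
rewrite -hunionA; apply: le_trans (sepsum_le _ _ _ dabk) _.
by rewrite -addeA; apply: leeD2l; apply: sepsum_le.
Qed.

Lemma tsub_ge0 (a b : \bar R) : 0 <= tsub a b.
Proof. by rewrite /tsub; case: ifP => // _; rewrite le_max lexx orbT. Qed.

Lemma tsub_mono (a a' b : \bar R) : a <= a' -> tsub a b <= tsub a' b.
Proof.
move=> aa; rewrite /tsub; case: ifP => // _.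
rewrite ge_max !le_max lexx !orbT andbT.
by rewrite (leeB aa (lexx b)).
Qed.

Lemma tsub_add (a c b : \bar R) : 0 <= a -> 0 <= c -> tsub (a + c) b <= tsub a b + c.
Proof.
rewrite /tsub; case: ifP => [_|bi]; first by rewrite add0e.
move=> a0 c0; rewrite ge_max; apply/andP; split; last first.
  by apply: adde_ge0 => //; rewrite le_max lexx orbT.
apply: le_trans (_ : (a - b) + c <= _); last first.
  by apply: leeD2r; rewrite le_max lexx.
move: a b c a0 c0 bi => [a| |] [b| |] [c| |] //= a0 c0 _ ; rewrite ?leey //.
by rewrite addeAC.
Qed.

Lemma wand_ge0 B f st : 0 <= wand B f st.
Proof.
apply: ereal_sup_ge; exists (tsub (f (st.1, hunion st.2 [fmap]%fmap)) (B (st.1, [fmap]%fmap))).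
  by exists [fmap]%fmap; split => //; apply: hdisj0.
exact: tsub_ge0.
Qed.

Lemma wand_mono2 B f f' : (forall st, f st <= f' st) ->
  forall st, wand B f st <= wand B f' st.
Proof.
move=> F st; apply: ge_ereal_sup => _ [h' [d ->]].
apply: ereal_sup_ge; exists (tsub (f' (st.1, hunion st.2 h')) (B (st.1, h'))).
  by exists h'.
exact: tsub_mono.
Qed.

Lemma wand_frame B f g s h1 h2 : hdisj h1 h2 ->
  (forall st, 0 <= f st) -> (forall st, 0 <= g st) ->
  wand B (sepsum f g) (s, hunion h1 h2) <= wand B f (s, h1) + g (s, h2).
Proof.
move=> d F G; apply: ge_ereal_sup => _ [h' [d' ->]] /=.
move: d'; rewrite hdisjUl => /andP[d1 d2].
have E : hunion (hunion h1 h2) h' = hunion (hunion h1 h') h2.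
  by rewrite -hunionA (@hunionC h2 h' d2) hunionA.
have d3 : hdisj (hunion h1 h') h2 by rewrite hdisjUl d hdisj_sym d2.
rewrite E; apply: le_trans (tsub_mono (B (s,h')) (sepsum_le _ _ _ d3)) _.
apply: le_trans (tsub_add _ _ _) _ => //; apply: leeD2r.
apply: ereal_sup_ge; exists (tsub (f (s, hunion h1 h')) (B (s, h'))) => //.
by exists h'.
Qed.

Lemma wand_frame' B f g st :
  (forall st, 0 <= f st) -> (forall st, 0 <= g st) ->
  wand B (sepsum f g) st <= sepsum (wand B f) g st.
Proof.
move=> F G; case: st => s h; apply: sepsum_ge => h1 h2 d /= ->.
exact: wand_frame.
Qed.

Lemma subst_frame f g x e st : notinVars x g ->
  subst (sepsum f g) x e st <= sepsum (subst f x e) g st.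
Proof.
move=> N; case: st => s h; apply: sepsum_ge => h1 h2 d /= ->.
rewrite /subst /=; apply: le_trans (sepsum_le _ _ _ d) _.
by rewrite N.
Qed.

Lemma ind_ge0 P : 0 <= ind R P.
Proof. by rewrite /ind; case: ifP => //; rewrite leey. Qed.

End Gen.


Section Prog.
Variables (R : realType) (V : finType).
Implicit Types (f g : fn R V) (C : prog V).

Lemma iv_true : iv R true = 1. Proof. by rewrite /iv /= mulr1n. Qed.
Lemma iv_false : iv R false = 0. Proof. by []. Qed.

Definition atomic C := match C with
  | Assign _ _ | Alloc _ _ | Store _ _ | Lookup _ _ | Free _ => true | _ => false end.

Lemma ert_at_mono C f f' : atomic C -> (forall st, f st <= f' st) ->
  forall st, ert C f st <= ert C f' st.
Proof.
case: C => // [x e|x e|e e'|x e|e] _ F st /=.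
- exact: F.
- apply: ge_ereal_sup => _ [n _ <-]; apply: ereal_sup_ge.
  eexists; first by exists n.
  by apply: wand_mono2 => st'; exact: F.
- by apply: sepsum_mono => // st'; apply: wand_mono2.
- apply: le_ereal_inf_tmp => _ [n _ <-]; apply: ereal_inf_le.
  eexists; first by exists n.
  by apply: sepsum_mono => // st'; apply: wand_mono2 => st''; exact: F.
- exact: sepsum_mono.
Qed.

Lemma ert_at_ge0 C f : atomic C -> (forall st, 0 <= f st) ->
  forall st, 0 <= ert C f st.
Proof.
case: C => // [x e|x e|e e'|x e|e] _ F st /=.
- exact: F.
- apply: ereal_sup_ge; eexists; first by exists 0%N.
  exact: wand_ge0.
- by apply: sepsum_ge0 => st'; [exact: ind_ge0 | exact: wand_ge0].
- apply: le_ereal_inf_tmp => _ [n _ <-].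
  by apply: sepsum_ge0 => st'; [exact: ind_ge0 | exact: wand_ge0].
- by apply: sepsum_ge0 => // st'; exact: ind_ge0.
Qed.

Lemma ert_at_frame C f g : atomic C ->
  (forall x, x \in mods C -> notinVars x g) ->
  (forall st, 0 <= f st) -> (forall st, 0 <= g st) -> (forall st, g st \is a fin_num) ->
  forall st, ert C (sepsum f g) st <= sepsum (ert C f) g st.
Proof.
case: C => // [x e|x e|e e'|x e|e] _ M F G Gf st /=.
- by apply: subst_frame; apply: M; rewrite inE.
- have N : notinVars x g by apply: M; rewrite inE.
  apply: ge_ereal_sup => _ [n _ <-].
  apply: le_trans (wand_mono2 _ (fun st' => subst_frame _ _ st' N) st) _.
  apply: le_trans (wand_frame' _ st (fun st' => F _) G) _.
  case: st => s h; apply: sepsum_mono_s => // h'.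
  apply: ereal_sup_ge; eexists; first by exists n.
  exact: lexx.
- apply: le_trans _ (sepsum_assoc _ _ st Gf).
  apply: sepsum_mono => // st'.
  exact: wand_frame'.
- have N : notinVars x g by apply: M; rewrite inE.
  case: st => s h; apply: sepsum_ge => h1 h2 d /= ->.
  rewrite -leeBlDr //; apply: le_ereal_inf_tmp => _ [n _ <-]; rewrite leeBlDr //.
  apply: ereal_inf_le; eexists; first by exists n.
  apply: le_trans _ (sepsum_le _ _ _ d); apply: le_trans _ (sepsum_assoc _ _ _ Gf).
  apply: sepsum_mono => // st'.
  apply: le_trans (wand_mono2 _ (fun st'' => subst_frame _ _ st'' N) st') _.
  exact: (wand_frame' _ st' (fun st'' => F _) G).
- exact: sepsum_assoc.
Qed.

End Prog.


Section Aert.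
Variables (R : realType) (V : finType).
Implicit Types (f g X Y Z pi : fn R V) (C : prog V).

Lemma pr_ge0 (p : pexp V) s : (0 <= @pr R V p s)%R.
Proof. by rewrite /pr ler0q; case: (p s) => q /= /andP[]. Qed.

Lemma pr_le1 (p : pexp V) s : (@pr R V p s <= 1)%R.
Proof.
have E1 : ratr 1%R = 1%R :> R by exact: rmorph1.
by rewrite /pr -E1 ler_rat; case: (p s) => q /= /andP[].
Qed.

Lemma pr1_ge0 (p : pexp V) s : (0 <= (1 - @pr R V p s)%:E).
Proof. by rewrite lee_fin subr_ge0 pr_le1. Qed.

Lemma pr_ge0E (p : pexp V) s : (0 <= (@pr R V p s)%:E).
Proof. by rewrite lee_fin pr_ge0. Qed.

Lemma iv_ge0 b : 0 <= iv R b.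
Proof. by case: b; rewrite ?iv_true ?iv_false. Qed.

Lemma conv_const (p : R) (c : \bar R) : c \is a fin_num ->
  p%:E * c + (1 - p)%:E * c = c.
Proof.
move: c => [r| |] // _; rewrite -!EFinM -EFinD.
by rewrite -mulrDl addrC subrK mul1r.
Qed.

Lemma mix_add (p : R) (c x y : \bar R) : c \is a fin_num ->
  p%:E * (x + c) + (1 - p)%:E * (y + c) = p%:E * x + (1 - p)%:E * y + c.
Proof.
move=> cf; rewrite !muleDr // ?fin_num_adde_defl //.
by rewrite addeACA conv_const.
Qed.

Lemma aert_mono pi C : forall X X', (forall st, X st <= X' st) ->
  forall st, aert pi C X st <= aert pi C X' st.
Proof.
elim: C => [e|x e|x e|e e'|x e|e|C1 IH1 p C2 IH2|b C1 IH1 C2 IH2|C1 IH1 C2 IH2|b C1 IH1]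
  X X' H st /=.
- exact: leeD2l.
- apply: leeB (lexx _); apply: (@ert_at_mono _ _ (Assign x e) (fadd X pi) (fadd X' pi) erefl) => st'; exact: leeD2r.
- apply: leeB (lexx _); apply: (@ert_at_mono _ _ (Alloc x e) (fadd X pi) (fadd X' pi) erefl) => st'; exact: leeD2r.
- apply: leeB (lexx _); apply: (@ert_at_mono _ _ (Store e e') (fadd X pi) (fadd X' pi) erefl) => st'; exact: leeD2r.
- apply: leeB (lexx _); apply: (@ert_at_mono _ _ (Lookup x e) (fadd X pi) (fadd X' pi) erefl) => st'; exact: leeD2r.
- apply: leeB (lexx _); apply: (@ert_at_mono _ _ (Free e) (fadd X pi) (fadd X' pi) erefl) => st'; exact: leeD2r.
- by apply: leeD; apply: lee_wpmul2l; rewrite ?pr_ge0E ?pr1_ge0 //; [apply: IH1|apply: IH2].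
- by apply: leeD; apply: lee_wpmul2l; rewrite ?iv_ge0 //; [apply: IH1|apply: IH2].
- by apply: IH1; apply: IH2.
- apply: le_ereal_inf_tmp => _ [W [HW1 HW2] <-]; apply: ereal_inf_le.
  exists (W st) => //; exists W => //; split => // st'.
  apply: le_trans (HW2 st'); apply: leeD2r; apply: lee_wpmul2l; [exact: iv_ge0|exact: H].
Qed.

Lemma fadd_ge0 X pi st : pi st \is a fin_num -> - pi st <= X st -> 0 <= fadd X pi st.
Proof. by move=> pf H; rewrite /fadd -leeBlDr // sub0e. Qed.

Lemma aert_inA pi C : (forall st, pi st \is a fin_num) -> (forall st, 0 <= pi st) ->
  forall X, (forall st, - pi st <= X st) -> forall st, - pi st <= aert pi C X st.
Proof.
move=> pf p0.
elim: C => [e|x e|x e|e e'|x e|e|C1 IH1 p C2 IH2|b C1 IH1 C2 IH2|C1 IH1 C2 IH2|b C1 IH1]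
  X H st /=.
- by apply: lee_paddl => //; rewrite lee_fin ler0n.
- rewrite leeBrDr // addeC subee //; apply: (@ert_at_ge0 _ _ (Assign x e) (fadd X pi) erefl) => st'; exact: fadd_ge0.
- rewrite leeBrDr // addeC subee //; apply: (@ert_at_ge0 _ _ (Alloc x e) (fadd X pi) erefl) => st'; exact: fadd_ge0.
- rewrite leeBrDr // addeC subee //; apply: (@ert_at_ge0 _ _ (Store e e') (fadd X pi) erefl) => st'; exact: fadd_ge0.
- rewrite leeBrDr // addeC subee //; apply: (@ert_at_ge0 _ _ (Lookup x e) (fadd X pi) erefl) => st'; exact: fadd_ge0.
- rewrite leeBrDr // addeC subee //; apply: (@ert_at_ge0 _ _ (Free e) (fadd X pi) erefl) => st'; exact: fadd_ge0.
- rewrite -[X in X <= _](@conv_const (@pr R V p st.1)) ?fin_numN //.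
  by apply: leeD; apply: lee_wpmul2l; rewrite ?pr_ge0E ?pr1_ge0 //; [apply: IH1|apply: IH2].
- case: (b st.1) => /=; rewrite ?iv_true ?iv_false mul1e mul0e ?adde0 ?add0e;
    [exact: IH1|exact: IH2].
- by apply: IH1; apply: IH2.
- by apply: le_ereal_inf_tmp => _ [W [HW1 HW2] <-].
Qed.

End Aert.


Section Main.
Variables (R : realType) (V : finType).
Implicit Types (f g X Y Z pi : fn R V) (C : prog V).

Lemma atomic_case pi1 pi2 P C Z Y st : atomic C ->
  (forall x, x \in mods C -> notinVars x pi2) ->
  (forall st, pi1 st \is a fin_num) ->
  (forall st, 0 <= pi2 st) -> (forall st, pi2 st \is a fin_num) ->
  (forall st, P st \is a fin_num) ->
  (forall st, - pi1 st <= Y st) ->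
  (forall st, Z st + P st <= sepsum (fadd Y pi1) pi2 st) ->
  aert P C Z st + P st <= sepsum (fadd (aert pi1 C Y) pi1) pi2 st.
Proof.
move=> HC M f1 g2 f2 fP HY H.
have E1 : forall pi X st, aert pi C X st = ert C (fadd X pi) st - pi st.
  by case: C HC {M}.
rewrite E1 subeK //.
have E2 : fadd (aert pi1 C Y) pi1 = ert C (fadd Y pi1).
  by apply: funext => st'; rewrite /fadd E1 subeK.
rewrite E2.
apply: le_trans (ert_at_frame HC M _ g2 f2 st).
  by apply: (ert_at_mono HC) => st'; exact: H.
by move=> st'; apply: fadd_ge0.
Qed.

Lemma main_gen pi1 pi2 P :
  (forall st, pi1 st \is a fin_num) -> (forall st, 0 <= pi1 st) ->
  (forall st, pi2 st \is a fin_num) -> (forall st, 0 <= pi2 st) ->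
  (forall st, P st \is a fin_num) -> (forall st, 0 <= P st) ->
  forall C, (forall x, x \in mods C -> notinVars x pi2) ->
  forall Z Y, (forall st, - P st <= Z st) -> (forall st, - pi1 st <= Y st) ->
  (forall st, Z st + P st <= sepsum (fadd Y pi1) pi2 st) ->
  forall st, aert P C Z st + P st <= sepsum (fadd (aert pi1 C Y) pi1) pi2 st.
Proof.
move=> f1 g1 f2 g2 fP gP.
elim=> [e|x e|x e|e e'|x e|e|C1 IH1 p C2 IH2|b C1 IH1 C2 IH2|C1 IH1 C2 IH2|b C1 IH1]
  M Z Y HZ HY H st.
- rewrite /= -addeA; case: st => s h; apply: sepsum_ge => h1 h2 d /= ->.
  rewrite /fadd /= -!addeA; apply: leeD2l.
  apply: le_trans (H (s, hunion h1 h2)) _.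
  by rewrite addeA; exact: sepsum_le.
- exact: atomic_case.
- exact: atomic_case.
- exact: atomic_case.
- exact: atomic_case.
- exact: atomic_case.
- have M1 : forall x, x \in mods C1 -> notinVars x pi2.
    by move=> x hx; apply: M; rewrite /= mem_cat hx.
  have M2 : forall x, x \in mods C2 -> notinVars x pi2.
    by move=> x hx; apply: M; rewrite /= mem_cat hx orbT.
  rewrite /= -mix_add //.
  apply: le_trans.
    apply: leeD; apply: lee_wpmul2l;
      [exact: pr_ge0E | exact: (IH1 M1 Z Y HZ HY H) | exact: pr1_ge0 | exact: (IH2 M2 Z Y HZ HY H)].
  case: st => s h; apply: sepsum_ge => h1 h2 d /= ->.
  rewrite /fadd /= -addeA -mix_add ?fin_numD ?f1 ?f2 //.
  apply: leeD; (apply: lee_wpmul2l; [exact: pr_ge0E || exact: pr1_ge0 |]);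
    rewrite addeA; exact: sepsum_le.
- have M1 : forall x, x \in mods C1 -> notinVars x pi2.
    by move=> x hx; apply: M; rewrite /= mem_cat hx.
  have M2 : forall x, x \in mods C2 -> notinVars x pi2.
    by move=> x hx; apply: M; rewrite /= mem_cat hx orbT.
  case: st => s h /=; case Eb: (b s) => /=;
    rewrite ?iv_true ?iv_false mul1e mul0e ?adde0 ?add0e.
  + apply: le_trans (IH1 M1 Z Y HZ HY H (s, h)) _.
    apply: sepsum_mono_s => // h'; rewrite /fadd /= Eb /= iv_true iv_false mul1e mul0e adde0.
    exact: lexx.
  + apply: le_trans (IH2 M2 Z Y HZ HY H (s, h)) _.
    apply: sepsum_mono_s => // h'; rewrite /fadd /= Eb /= iv_true iv_false mul1e mul0e add0e.
    exact: lexx.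
- have M1 : forall x, x \in mods C1 -> notinVars x pi2.
    by move=> x hx; apply: M; rewrite /= mem_cat hx.
  have M2 : forall x, x \in mods C2 -> notinVars x pi2.
    by move=> x hx; apply: M; rewrite /= mem_cat hx orbT.
  apply: (IH1 M1).
  + by move=> st'; apply: aert_inA.
  + by move=> st'; apply: aert_inA.
  + exact: IH2.
- have M1 : forall x, x \in mods C1 -> notinVars x pi2 by [].
  have L_inA : forall st, - pi1 st <= aert pi1 (While b C1) Y st.
    by move=> st'; apply: aert_inA.
  have L_pre : forall st, iv R (~~ b st.1) * Y st +
      iv R (b st.1) * aert pi1 C1 (aert pi1 (While b C1) Y) st <= aert pi1 (While b C1) Y st.
    move=> st'; apply: le_ereal_inf_tmp => _ [W [HW1 HW2] <-].
    apply: le_trans (HW2 st'); apply: leeD2l; apply: lee_wpmul2l; first exact: iv_ge0.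
    apply: aert_mono => st''; apply: ereal_inf_le.
    by exists (W st'') => //; exists W.
  set L := aert pi1 (While b C1) Y in L_inA L_pre *.
  pose W' := fun st => sepsum (fadd L pi1) pi2 st - P st.
  have W'inA : forall st, - P st <= W' st.
    move=> st'; rewrite /W' leeBrDr // addeC subee //.
    by apply: sepsum_ge0 => // st''; apply: fadd_ge0.
  have W'P : forall st, W' st + P st = sepsum (fadd L pi1) pi2 st.
    by move=> st'; rewrite /W' subeK.
  rewrite -W'P; apply: leeD2r.
  apply: ereal_inf_le; exists (W' st) => //; exists W' => //; split => // -[s h] /=.
  rewrite /W' leeBrDr //.
  case Eb: (b s) => /=; rewrite ?iv_true ?iv_false mul1e mul0e ?adde0 ?add0e.
  + have HW : forall st, W' st + P st <= sepsum (fadd L pi1) pi2 st.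
      by move=> st'; rewrite W'P.
    apply: le_trans (IH1 M1 W' L W'inA L_inA HW (s, h)) _.
    apply: sepsum_mono_s => // h'; rewrite /fadd; apply: leeD2r.
    have := L_pre (s, h'); rewrite /= Eb /= iv_true iv_false mul0e mul1e add0e.
    by [].
  + apply: le_trans (H (s, h)) _.
    apply: sepsum_mono_s => // h'; rewrite /fadd; apply: leeD2r.
    have := L_pre (s, h'); rewrite /= Eb /= iv_true iv_false mul0e mul1e adde0.
    by [].
Qed.

End Main.


Unset Implicit Arguments.
Set Strict Implicit.

Theorem mainTheorem6 (R : realType) (V : finType) (pi1 pi2 : state V -> R) :
  (forall st, (0 <= pi1 st)%R) ->
  (forall st, (0 <= pi2 st)%R) ->
  (forall st, liftE pi1 st <= sepsum (liftE pi1) (liftE pi2) st) ->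
  forall (C : prog V) (X : fn R V),
    inA (liftE pi1) X ->
    (forall x, x \in mods C -> notinVars x pi2) ->
    (forall st, X st + sepsum (liftE pi1) (liftE pi2) st
                <= sepsum (fadd X (liftE pi1)) (liftE pi2) st) ->
    forall st,
      aert (sepsum (liftE pi1) (liftE pi2)) C X st
      <= sepsum (fadd (aert (liftE pi1) C X) (liftE pi1)) (liftE pi2) st
         - sepsum (liftE pi1) (liftE pi2) st.
Proof.
move=> g1 g2 H3 C X HX M HH st.
have f1 : forall st, liftE pi1 st \is a fin_num by [].
have f2 : forall st, liftE pi2 st \is a fin_num by [].
have g1' : forall st, 0 <= liftE pi1 st by move=> st'; rewrite lee_fin.
have g2' : forall st, 0 <= liftE pi2 st by move=> st'; rewrite lee_fin.
have gP : forall st, 0 <= sepsum (liftE pi1) (liftE pi2) st.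
  by move=> st'; apply: sepsum_ge0.
have fP : forall st, sepsum (liftE pi1) (liftE pi2) st \is a fin_num.
  move=> [s h]; rewrite ge0_fin_numE //.
  have := sepsum_le (liftE pi1) (liftE pi2) s (hdisj0 h); rewrite hunion0 => Hle.
  by apply: le_lt_trans Hle _; rewrite /liftE -EFinD ltey.
have M' : forall x, x \in mods C -> notinVars x (liftE pi2).
  by move=> x hx s h v; rewrite /liftE (M x hx).
have HZ : forall st, - sepsum (liftE pi1) (liftE pi2) st <= X st.
  by move=> st'; apply: le_trans (HX st'); rewrite leeN2; exact: H3.
have := main_gen f1 g1' f2 g2' fP gP M' HZ HX HH st.
by rewrite leeBrDr.
Qed.
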